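(* Let $U\subseteq L_{\mathrm{up}}$ be a set of up-links such that the sets $P_u$, $u\in U$, are pairwise disjoint, and let $(C,A)$ be a (weakly) connected component of the dependency graph of $U$ (which is an arborescence). If $\ell_1,\ell_2\in C$ satisfy $V_{\ell_1}\cap V_{\ell_2}\neq\emptyset$, then $\ell_1$ and $\ell_2$ have an ancestry relationship in the arborescence $(C,A)$, i.e. $\ell_1$ is an ancestor of $\ell_2$ or $\ell_2$ is an ancestor of $\ell_1$ in $(C,A)$.
   Context: Let $(G=(V,E),L,w)$ be a WTAP instance (spanning tree $G$, links $L\subseteq\binom V2$, weights $w>0$) with a fixed root $r\in V$, and let $F\subseteq L$ be a WTAP solution, i.e. $\bigcup_{\ell\in F}P_\ell=E$, where $P_\ell$ is the edge set of the tree path between the endpoints of $\ell$ and $V_\ell$ its vertex set. Ancestors of $v$ are the vertices on the $r$-$v$ path in $G$ (including $r$ and $v$); descendants are defined reciprocally. $\mathrm{apex}(\ell)$ is the vertex of $V_\ell$ closest to $r$. An up-link is a link $\{t,b\}$ with $t$ an ancestor of $b$; $L_{\mathrm{up}}$ is the set of up-links. For $v\in V$ let $B_v=\{\ell\in F\colon\mathrm{apex}(\ell)\text{ is a descendant of }v\}$. For an up-link $u=\{t,b\}$ with $t$ an ancestor of $b$, let $v_u$ be the ancestor of $t$ farthest from $r$ such that $P_u\subseteq\bigcup_{\ell\in B_{v_u}}P_\ell$, and fix $F_u\subseteq B_{v_u}$ inclusion-wise minimal with $P_u\subseteq\bigcup_{\ell\in F_u}P_\ell$. For $\ell\in F_u$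 let $P_{u,\ell}=P_u\setminus\bigcup_{\bar\ell\in F_u\setminus\{\ell\}}P_{\bar\ell}$; these sets are nonempty, pairwise disjoint, and each is the edge set of a path. Define $\ell_1\prec_u\ell_2$ iff the edges of $P_{u,\ell_1}$ appear before those of $P_{u,\ell_2}$ on the $t$-$b$ path in $G$. If $\ell_1\prec_u\cdots\prec_u\ell_q$ are the links of $F_u$, let $A_u=\{(\ell_i,\ell_{i+1})\colon i=1,\dots,q-1\}$. The dependency graph of $U\subseteq L_{\mathrm{up}}$ is the directed graph with vertex set $F$ whose arc set is the disjoint union of the $A_u$, $u\in U$. When the $P_u$, $u\in U$, are pairwise disjoint, this graph is a branching (no directed cycles, in-degrees at most one), so each weakly connected component is an arborescence. *)

(* Defs.v *)
From mathcomp Require Import all_boot.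
Set Implicit Arguments. Unset Strict Implicit. Unset Printing Implicit Defensive.

(* The rooted spanning tree G with root r is given by its parent function
   par : V -> V (par r = r); its edges are {v, par v} for v <> r, and each
   edge is identified with its lower endpoint v (a vertex different from r).
   Links are 2-element vertex sets. *)

Section WTAP.
Variables (V : finType) (par : V -> V) (r : V).

Definition anc (a v : V) : bool := [exists k : 'I_#|V|.+1, iter k par v == a].

Definition depth (v : V) : nat := #|[set a | anc a v]|.-1.

(* P_l : tree edges (lower endpoints) on the path between the endpoints of l:
   edge {e, par e} separates the endpoints iff exactly one of them lies in
   the subtree of e. *)
Definition Pth (l : {set V}) : {set V} :=
  [set e | (e != r) && (#|[set x in l | anc e x]| == 1)].

Definition Vl (l : {set V}) : {set V} :=
  [set x | [exists e in Pth l, (x == e) || (x == par e)]].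

Definition is_apex (l : {set V}) (x : V) : bool :=
  (x \in Vl l) && [forall y in Vl l, depth x <= depth y].

Definition Bset (F : {set {set V}}) (v : V) : {set {set V}} :=
  [set l in F | [exists x, is_apex l x && anc v x]].

Definition covers (S : {set {set V}}) (Q : {set V}) : bool :=
  Q \subset \bigcup_(l in S) Pth l.

Definition is_vu (F : {set {set V}}) (u : {set V}) (t v : V) : bool :=
  [&& anc v t, covers (Bset F v) (Pth u) &
      [forall w, (anc w t && covers (Bset F w) (Pth u)) ==> (depth w <= depth v)]].

Definition Fu_spec (F : {set {set V}}) (u : {set V}) (t : V) (S : {set {set V}}) : bool :=
  [&& [exists v, is_vu F u t v && (S \subset Bset F v)],
      covers S (Pth u) &
      [forall S' : {set {set V}}, (S' \proper S) ==> ~~ covers S' (Pth u)]].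

Definition Pul (u : {set V}) (S : {set {set V}}) (l : {set V}) : {set V} :=
  Pth u :\: \bigcup_(l' in S :\ l) Pth l'.

(* l1 <_u l2 : edges of P_{u,l1} come before those of P_{u,l2} on the t-b
   path (the t-b path goes downward from t, so "before" = smaller depth) *)
Definition precu (u : {set V}) (S : {set {set V}}) (l1 l2 : {set V}) : bool :=
  [forall e1 in Pul u S l1, forall e2 in Pul u S l2, depth e1 < depth e2].

Definition arcu (u : {set V}) (S : {set {set V}}) (l1 l2 : {set V}) : bool :=
  [&& l1 \in S, l2 \in S, precu u S l1 l2 &
      [forall l3 in S, ~~ (precu u S l1 l3 && precu u S l3 l2)]].

Definition dep_arc (U : {set {set V}}) (Fu : {set V} -> {set {set V}})
  : rel {set V} := fun l1 l2 => [exists u in U, arcu u (Fu u) l1 l2].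

Definition dep_sym (U : {set {set V}}) (Fu : {set V} -> {set {set V}})
  : rel {set V} := fun l1 l2 => dep_arc U Fu l1 l2 || dep_arc U Fu l2 l1.

End WTAP.

(* Main.v *)
Require Import Defs.
From mathcomp Require Import all_boot.
Set Implicit Arguments. Unset Strict Implicit. Unset Printing Implicit Defensive.

Lemma conn_last (T : finType) (e : rel T) x y : connect e x y -> x != y ->
  exists2 z, connect e x z & e z y.
Proof.
case/connectP => p; elim/last_ind: p => [|p z _] /=; first by move=> _ ->; rewrite eqxx.
rewrite rcons_path last_rcons => /andP[hp hz] -> _.
by exists (last x p) => //; apply/connectP; exists p.
Qed.

Lemma conn_first (T : finType) (e : rel T) x y : connect e x y -> x != y ->
  exists2 z, e x z & connect e z y.
Proof.
case/connectP => [[|z p]] /=; first by move=> _ ->; rewrite eqxx.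
case/andP => hz hp -> _; exists z => //; apply/connectP; exists p => //.
Qed.

Section Tree.
Variables (V : finType) (par : V -> V) (r : V).
Hypothesis Hr : par r = r.
Hypothesis Hit : forall v, iter #|V| par v = r.

Local Notation anc := (anc par).
Local Notation depth := (depth par).
Local Notation Pth := (Pth par r).
Local Notation Vl := (Vl par r).
Local Notation covers := (covers par r).

Lemma iter_r k : iter k par r = r.
Proof. by elim: k => //= k ->. Qed.

Lemma ancP a v : reflect (exists k, iter k par v = a) (anc a v).
Proof.
apply: (iffP existsP) => [[k /eqP <-]|[k <-]]; first by exists k.
have [lek|ltk] := leqP k #|V|.
  by exists (Ordinal (n:=#|V|.+1) (m:=k) (leq_ltn_trans lek (ltnSn _))).
exists (Ordinal (ltnSn #|V|)); apply/eqP => /=.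
by rewrite Hit -(subnK (ltnW ltk)) iterD Hit iter_r.
Qed.

Lemma anc_refl v : anc v v.
Proof. by apply/ancP; exists 0. Qed.

Lemma anc_par v : anc (par v) v.
Proof. by apply/ancP; exists 1. Qed.

Lemma anc_root v : anc r v.
Proof. by apply/ancP; exists #|V|. Qed.

Lemma anc_trans a b c : anc a b -> anc b c -> anc a c.
Proof.
move=> /ancP[k1 <-] /ancP[k2 <-]; apply/ancP; exists (k1 + k2).
by rewrite iterD.
Qed.

Lemma anc_total a a' v : anc a v -> anc a' v -> anc a a' || anc a' a.
Proof.
move=> /ancP[k <-] /ancP[k' <-].
have [le|le] := leqP k k'.
  by apply/orP; right; apply/ancP; exists (k' - k); rewrite -iterD subnK.
by apply/orP; left; apply/ancP; exists (k - k'); rewrite -iterD subnK // ltnW.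
Qed.

Lemma iter_mul_fix v k n : iter k par v = v -> iter (n * k) par v = v.
Proof.
move=> H; elim: n => [|n IH] //=.
by rewrite mulSn iterD IH H.
Qed.

Lemma anc_antisym a v : anc a v -> anc v a -> a = v.
Proof.
move=> /ancP[k Ha] /ancP[k' Hv].
have Hc : iter (k' + k) par v = v by rewrite iterD Ha.
case: k Ha Hc => [|k] Ha Hc; first by [].
have Hvr : v = r.
  have le : #|V| <= #|V| * (k' + k.+1) by rewrite leq_pmulr // addnS.
  move: (iter_mul_fix #|V| Hc) => H.
  rewrite -{1}H.
  by rewrite -(subnK le) iterD Hit iter_r.
by rewrite -Ha Hvr iter_r.
Qed.

Definition sanc a v := anc a v && (a != v).

Lemma depth_le a v : anc a v -> depth a <= depth v.
Proof.
move=> H; rewrite /depth -!subn1 leq_sub2r // subset_leq_card //.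
by apply/subsetP => x; rewrite !inE => /anc_trans; apply.
Qed.

Lemma depth_lt a v : sanc a v -> depth a < depth v.
Proof.
case/andP=> H ne; rewrite /depth.
have h1 : 0 < #|[set x | anc x a]|.
  by apply/card_gt0P; exists a; rewrite inE anc_refl.
rewrite -(ltn_add2r 1) !addn1 !prednK //; last by apply: leq_trans h1 _; apply: subset_leq_card; apply/subsetP => x; rewrite !inE => /anc_trans; apply.
apply: proper_card; rewrite properEneq; apply/andP; split.
  apply/negP => /eqP E.
  have : v \in [set x | anc x v] by rewrite inE anc_refl.
  rewrite -E inE => /(anc_antisym H) E'. by rewrite E' eqxx in ne.
by apply/subsetP => x; rewrite !inE => /anc_trans; apply.
Qed.

Lemma sanc_anc a v : sanc a v -> anc a v.
Proof. by case/andP. Qed.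

Lemma sanc_trans_l a b c : sanc a b -> anc b c -> sanc a c.
Proof.
case/andP=> H1 ne H2; rewrite /sanc (anc_trans H1 H2) /=.
apply/eqP => E; subst c; by rewrite (anc_antisym H1 H2) eqxx in ne.
Qed.

Lemma sanc_trans_r a b c : anc a b -> sanc b c -> sanc a c.
Proof.
move=> H1 /andP[H2 ne]; rewrite /sanc (anc_trans H1 H2) /=.
apply/eqP => E; subst c; by rewrite (anc_antisym H2 H1) eqxx in ne.
Qed.

Lemma sanc_irr a : ~~ sanc a a.
Proof. by rewrite /sanc eqxx andbF. Qed.

Lemma sanc_not_anc a v : sanc a v -> ~~ anc v a.
Proof.
case/andP=> H ne; apply/negP => H'. by rewrite (anc_antisym H H') eqxx in ne.
Qed.

Lemma anc_cases a b v : anc a v -> anc b v -> anc a b \/ sanc b a.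
Proof.
move=> Ha Hb; case: (boolP (anc a b)) => [|n]; first by left.
right; move: (anc_total Ha Hb); rewrite (negbTE n) /= => H.
rewrite /sanc H; apply/eqP => E; subst; by rewrite anc_refl in n.
Qed.

Lemma sanc_par a e : sanc a e -> anc a (par e).
Proof.
case/andP=> /ancP[k Hk] ne; case: k Hk => [|k] Hk; first by rewrite -Hk eqxx in ne.
by apply/ancP; exists k; rewrite -iterSr.
Qed.

Lemma child_toward c x : sanc c x -> exists e, [/\ par e = c, anc e x & e != c].
Proof.
case/andP=> /ancP[k Hk] ne; elim: k Hk => [|k IH] Hk; first by rewrite -Hk eqxx in ne.
case: (eqVneq (iter k par x) c) => [E|E]; first exact: IH.
exists (iter k par x); split => //.
by apply/ancP; exists k.
Qed.

Lemma anc_r_eq v : anc v r -> v = r.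
Proof. by move=> H; apply: anc_antisym H (anc_root v). Qed.

Lemma lca_ex x y : exists c, [/\ anc c x, anc c y & forall w, anc w x -> anc w y -> anc w c].
Proof.
have P0 : anc r x && anc r y by rewrite !anc_root.
case: (@arg_maxnP _ r (fun w => anc w x && anc w y) depth P0) => c /andP[cx cy] Hmax.
exists c; split => // w wx wy.
case: (anc_cases wx cx) => // /depth_lt lt.
have H := Hmax w (introT andP (conj wx wy)).
by move: H; rewrite /geq /= leqNgt lt.
Qed.

Lemma card_pair_pred (x y : V) (P : pred V) : x != y ->
  #|[set z in [set x; y] | P z]| = P x + P y.
Proof.
move=> ne; have ne' : y != x by rewrite eq_sym.
have E : forall A : {set V}, (forall z, (z \in [set z in [set x; y] | P z]) = (z \in A)) ->
   [set z in [set x; y] | P z] = A by move=> A H; apply/setP => z; rewrite H.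
case Px: (P x); case Py: (P y).
- rewrite (E [set x; y]) ?cards2 ?ne // => z; rewrite !inE.
  by case: (eqVneq z x) => [->|zx]; [|case: (eqVneq z y) => [->|zy]];
   rewrite ?eqxx ?Px ?Py ?(negbTE ne) ?(negbTE ne') ?(negbTE zx) ?(negbTE zy) ?orbT ?andbT ?andbF ?orbF.
- rewrite (E [set x]) ?cards1 // => z; rewrite !inE.
  by case: (eqVneq z x) => [->|zx]; [|case: (eqVneq z y) => [->|zy]];
   rewrite ?eqxx ?Px ?Py ?(negbTE ne) ?(negbTE ne') ?(negbTE zx) ?(negbTE zy) ?orbT ?andbT ?andbF ?orbF.
- rewrite (E [set y]) ?cards1 // => z; rewrite !inE.
  by case: (eqVneq z x) => [->|zx]; [|case: (eqVneq z y) => [->|zy]];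
   rewrite ?eqxx ?Px ?Py ?(negbTE ne) ?(negbTE ne') ?(negbTE zx) ?(negbTE zy) ?orbT ?andbT ?andbF ?orbF.
- rewrite (E set0) ?cards0 // => z; rewrite !inE.
  by case: (eqVneq z x) => [->|zx]; [|case: (eqVneq z y) => [->|zy]];
   rewrite ?eqxx ?Px ?Py ?(negbTE ne) ?(negbTE ne') ?(negbTE zx) ?(negbTE zy) ?orbT ?andbT ?andbF ?orbF.
Qed.

Lemma Pth_pair x y e : x != y -> (e \in Pth [set x; y]) = (anc e x != anc e y).
Proof.
move=> ne; rewrite /Defs.Pth inE card_pair_pred //.
case: (eqVneq e r) => [->|ner]; first by rewrite !anc_root.
by case: (anc e x); case: (anc e y).
Qed.

Definition isLCA x y c := [/\ anc c x, anc c y & forall w, anc w x -> anc w y -> anc w c].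

Lemma Pth_sanc x y c e : x != y -> isLCA x y c -> e \in Pth [set x; y] -> sanc c e.
Proof.
move=> ne [cx cy cm]; rewrite Pth_pair //.
have H : forall x y, anc c x -> anc c y -> anc e x -> ~~ anc e y -> sanc c e.
  move=> x' y' cx' cy' ex ey; case: (anc_cases cx' ex) => [ce|ec].
    rewrite /sanc ce; apply/eqP => E; by rewrite -E cy' in ey.
  by rewrite (anc_trans (sanc_anc ec) cy') in ey.
case Ex: (anc e x); case Ey: (anc e y) => //= _.
  by apply: (H x y) => //; rewrite Ey.
by apply: (H y x) => //; rewrite Ex.
Qed.

Lemma Pth_conv_apex x y c f e : x != y -> isLCA x y c -> sanc c f -> anc f e ->
  e \in Pth [set x; y] -> f \in Pth [set x; y].
Proof.
move=> ne [cx cy cm] cf fe; rewrite !Pth_pair //.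
have fc : ~~ (anc f x && anc f y).
  apply/negP => /andP[a b]; have := cm f a b.
  by move/negP: (sanc_not_anc cf).
move: fc; case Ex: (anc e x); case Ey: (anc e y) => //= fc _.
  by rewrite (anc_trans fe Ex) in fc *; case: (anc f y) fc.
by rewrite (anc_trans fe Ey) in fc *; case: (anc f x) fc.
Qed.

Lemma Vl_pair x y c z : x != y -> isLCA x y c ->
  (z \in Vl [set x; y]) = anc c z && (anc z x || anc z y).
Proof.
move=> ne L; have [cx cy cm] := L.
apply/idP/idP.
  rewrite /Defs.Vl inE => /existsP[e /andP[eP /orP[/eqP->|/eqP->]]].
    have sc := Pth_sanc ne L eP; rewrite (sanc_anc sc) /=.
    by move: eP; rewrite Pth_pair //; case: (anc e x); case: (anc e y).
  have sc := Pth_sanc ne L eP; rewrite (sanc_par sc) /=.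
  move: eP; rewrite Pth_pair //; case Ex: (anc e x); case Ey: (anc e y) => //= _.
    by rewrite (anc_trans (anc_par _) Ex).
  by rewrite (anc_trans (anc_par _) Ey) orbT.
case/andP=> cz zxy; rewrite /Defs.Vl inE.
case: (eqVneq z c) => [->|nzc].
  have : sanc c x || sanc c y.
    rewrite /sanc cx cy /=; case: (eqVneq c x) => [Ecx|] //=.
    by apply/eqP => Ecy; rewrite -Ecx -Ecy eqxx in ne.
  have key : forall e, par e = c -> e != c -> anc e x -> anc e y -> False.
    move=> e pe nec ex ey; have ec := cm e ex ey.
    have ce : anc c e by rewrite -pe anc_par.
    by rewrite (anc_antisym ec ce) eqxx in nec.
  case/orP => /child_toward [e [pe ex nec]]; apply/existsP; exists e;
    rewrite pe eqxx orbT andbT Pth_pair // ex.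
    by case Ey: (anc e y) => //; case: (key e pe nec ex Ey).
  by case Ex: (anc e x) => //; case: (key e pe nec Ex ex).
apply/existsP; exists z; rewrite eqxx /= andbT Pth_pair //.
move/orP: zxy => [zx|zy].
  rewrite zx; apply/negP => zy; have := cm z zx zy => zc.
  by rewrite (anc_antisym zc cz) eqxx in nzc.
rewrite zy; apply/negP => /eqP zx; have := cm z zx zy => zc.
by rewrite (anc_antisym zc cz) eqxx in nzc.
Qed.

Local Notation is_apex := (is_apex par r).

Lemma is_apex_pair x y c z : x != y -> isLCA x y c -> is_apex [set x; y] z = (z == c).
Proof.
move=> ne L; have [cx cy cm] := L; rewrite /Defs.is_apex.
case: (eqVneq z c) => [->|nzc].
  rewrite (Vl_pair _ ne L) anc_refl cx /=; apply/forallP => w; apply/implyP.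
  by rewrite (Vl_pair _ ne L) => /andP[cw _]; apply: depth_le.
apply/negP => /andP[]; rewrite (Vl_pair _ ne L) => /andP[cz _] /forallP /(_ c).
rewrite (Vl_pair _ ne L) anc_refl cx /= leqNgt.
have -> // : depth c < depth z by apply: depth_lt; rewrite /sanc cz eq_sym nzc.
Qed.

Definition ap (l : {set V}) : V := odflt r [pick c | is_apex l c].

Lemma ap_pair x y c : x != y -> isLCA x y c -> ap [set x; y] = c.
Proof.
move=> ne L; rewrite /ap; case: pickP => [z|H] /=.
  by rewrite (is_apex_pair _ ne L) => /eqP.
by move: (H c); rewrite (is_apex_pair _ ne L) eqxx.
Qed.

Definition link (l : {set V}) := #|l| == 2.

Lemma linkP l : link l -> exists x y c, [/\ x != y, l = [set x; y], isLCA x y c & ap l = c].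
Proof.
case/cards2P => x [y [ne ->]]; have [c [cx cy cm]] := lca_ex x y.
exists x, y, c; split => //; exact: ap_pair.
Qed.

Lemma L1 l e : link l -> e \in Pth l -> sanc (ap l) e.
Proof. by case/linkP => x [y [c [ne -> L ->]]]; apply: Pth_sanc. Qed.

Lemma L2' l f e : link l -> sanc (ap l) f -> anc f e -> e \in Pth l -> f \in Pth l.
Proof. by case/linkP => x [y [c [ne -> L ->]]]; apply: Pth_conv_apex. Qed.

Lemma L2 l e1 e2 f : link l -> e1 \in Pth l -> e2 \in Pth l -> anc e1 f -> anc f e2 -> f \in Pth l.
Proof.
move=> lk h1 h2 a1 a2; apply: (L2' lk _ a2 h2).
exact: sanc_trans_l (L1 lk h1) a1.
Qed.

Lemma L3 l z : link l -> z \in Vl l -> anc (ap l) z.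
Proof. by case/linkP => x [y [c [ne -> L ->]]]; rewrite (Vl_pair _ ne L) => /andP[]. Qed.

Lemma L4 l y' z : link l -> anc (ap l) y' -> anc y' z -> z \in Vl l -> y' \in Vl l.
Proof.
case/linkP => x [y [c [ne -> L ->]]] cy' yz; rewrite !(Vl_pair _ ne L) cy' /=.
by case/andP => _ /orP[] h; rewrite (anc_trans yz h) ?orbT.
Qed.

Lemma L5 l f z : link l -> sanc (ap l) f -> anc f z -> z \in Vl l -> f \in Pth l.
Proof.
case/linkP => x [y [c [ne -> L ->]]] cf fz; have [cx cy cm] := L.
rewrite (Vl_pair _ ne L) Pth_pair // => /andP[_ zxy].
have nb : ~~ (anc f x && anc f y).
  apply/negP => /andP[a b]; move: (cm f a b); apply/negP; exact: sanc_not_anc.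
case/orP: zxy => h; have := anc_trans fz h; move: nb.
  by case: (anc f x); case: (anc f y).
by case: (anc f x); case: (anc f y).
Qed.

Lemma L6 l e : e \in Pth l -> e \in Vl l.
Proof. by move=> h; rewrite /Defs.Vl inE; apply/existsP; exists e; rewrite h eqxx. Qed.

Lemma L7 l z : link l -> is_apex l z = (z == ap l).
Proof. by case/linkP => x [y [c [ne -> L ->]]]; apply: is_apex_pair. Qed.

Lemma Bset_mem (F : {set {set V}}) v l : link l ->
  (l \in Bset par r F v) = (l \in F) && anc v (ap l).
Proof.
move=> lk; rewrite /Bset inE; congr (_ && _); apply/existsP/idP => [[x]|h].
  by rewrite L7 // => /andP[/eqP-> ].
by exists (ap l); rewrite L7 // eqxx.
Qed.

Lemma Pth_up t b e : t != b -> anc t b -> (e \in Pth [set t; b]) = anc e b && ~~ anc e t.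
Proof.
move=> ne tb; rewrite Pth_pair //.
by case Et: (anc e t); rewrite ?(anc_trans Et tb) //=; case: (anc e b).
Qed.

Section Chain.
Variables (u : {set V}) (t b : V) (S : {set {set V}}).
Hypotheses (tb : t != b) (atb : anc t b) (Hu : u = [set t; b]).
Hypothesis HSl : forall l, l \in S -> link l.
Hypothesis Hcov : covers S (Pth u).
Hypothesis Hmin : forall S' : {set {set V}}, S' \proper S -> ~~ covers S' (Pth u).

Local Notation Pul := (Pul par r u S).
Local Notation precu := (precu par r u S).
Local Notation arcu := (arcu par r u S).

Lemma PthuE e : (e \in Pth u) = anc e b && ~~ anc e t.
Proof. by rewrite Hu Pth_up. Qed.

Lemma PulE g l : (g \in Pul l) = (g \in Pth u) && [forall l' in S :\ l, g \notin Pth l'].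
Proof.
rewrite /Defs.Pul inE [X in X = _]andbC; congr (_ && _).
apply/idP/forall_inP => [h l' hl'|h].
  by apply/negP => hg; move/negP: h; apply; apply/bigcupP; exists l'.
by apply/bigcupP => [[l' hl' hg]]; move: (h l' hl'); rewrite hg.
Qed.

Lemma Pul_u g l : g \in Pul l -> g \in Pth u.
Proof. by rewrite PulE => /andP[]. Qed.

Lemma Pul_excl g l l' : g \in Pul l -> l' \in S -> l' != l -> g \notin Pth l'.
Proof.
rewrite PulE => /andP[_ /forall_inP h] hl' ne; apply: h; by rewrite !inE ne.
Qed.

Lemma Pul_Pth g l : g \in Pul l -> g \in Pth l.
Proof.
move=> hg; have := subsetP Hcov g (Pul_u hg) => /bigcupP[l' hl' h'].
case: (eqVneq l' l) => [<-//|ne]; by rewrite (negbTE (Pul_excl hg hl' ne)) in h'.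
Qed.

Lemma Pul_ne l : l \in S -> exists g, g \in Pul l.
Proof.
move=> hl; have := Hmin (properD1 hl); rewrite /covers => /subsetPn[g hg hn].
exists g; rewrite PulE hg /=; apply/forall_inP => l' hl'; apply/negP => h; move/negP: hn; apply.
by apply/bigcupP; exists l'.
Qed.

Lemma up_cases e f : e \in Pth u -> f \in Pth u -> anc e f \/ sanc f e.
Proof. rewrite !PthuE => /andP[eb _] /andP[fb _]; exact: anc_cases eb fb. Qed.

Lemma up_le e f : e \in Pth u -> f \in Pth u -> depth e <= depth f -> anc e f.
Proof.
move=> he hf le; case: (up_cases he hf) => // /depth_lt lt.
by rewrite leqNgt lt in le.
Qed.

Lemma precuP l1 l2 : reflect (forall e1 e2, e1 \in Pul l1 -> e2 \in Pul l2 -> depth e1 < depth e2) (precu l1 l2).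
Proof.
apply: (iffP forall_inP) => [h e1 e2 h1 h2|h e1 h1].
  by move: (h e1 h1) => /forall_inP; apply.
by apply/forall_inP => e2 h2; apply: h.
Qed.

Lemma precu_neq l1 l2 : l1 \in S -> precu l1 l2 -> l1 != l2.
Proof.
move=> h1 /precuP hp; apply/eqP => E; subst l2.
have [g hg] := Pul_ne h1; by move: (hp g g hg hg); rewrite ltnn.
Qed.

Lemma Tot l1 l2 : l1 \in S -> l2 \in S -> l1 != l2 -> precu l1 l2 || precu l2 l1.
Proof.
have key : forall l1 l2 f1 f2, l1 \in S -> l2 \in S -> l1 != l2 ->
   f1 \in Pul l1 -> f2 \in Pul l2 -> sanc f1 f2 -> precu l1 l2.
  move=> {}l1 {}l2 f1 f2 h1 h2 ne hf1 hf2 s12; apply/precuP => f1' f2' hf1' hf2'.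
  rewrite ltnNge; apply/negP => le.
  have a21 := up_le (Pul_u hf2') (Pul_u hf1') le.
  case: (up_cases (Pul_u hf1) (Pul_u hf2')) => [a|s].
    have : f2' \in Pth l1 by apply: (L2 (HSl h1) (Pul_Pth hf1) (Pul_Pth hf1') a a21).
    by apply/negP; apply: (Pul_excl hf2' h1 ne).
  have : f1 \in Pth l2 by apply: (L2 (HSl h2) (Pul_Pth hf2') (Pul_Pth hf2) (sanc_anc s) (sanc_anc s12)).
  by apply/negP; apply: (Pul_excl hf1 h2); rewrite eq_sym.
move=> h1 h2 ne; have [f1 hf1] := Pul_ne h1; have [f2 hf2] := Pul_ne h2.
have nf : f1 != f2.
  apply/eqP => E; subst f2; move: (Pul_excl hf1 h2); rewrite eq_sym => /(_ ne).
  by rewrite (Pul_Pth hf2).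
case: (up_cases (Pul_u hf1) (Pul_u hf2)) => [a|s].
  by rewrite (key l1 l2 f1 f2) // /sanc a nf.
by rewrite (key l2 l1 f2 f1) ?orbT // eq_sym.
Qed.

Lemma arcuE p q : arcu p q -> [/\ p \in S, q \in S, precu p q & forall l, l \in S -> ~~ (precu p l && precu l q)].
Proof. by case/and4P => h1 h2 h3 /forall_inP h4. Qed.

Lemma ClaimA p q : arcu p q -> ap q \in Pth u.
Proof.
case/arcuE => hp hq pq _; have ne := precu_neq hp pq.
have [g hg] := Pul_ne hq; have sg := L1 (HSl hq) (Pul_Pth hg).
have := Pul_u hg; rewrite !PthuE => /andP[gb gt].
rewrite (anc_trans (sanc_anc sg) gb) /=; apply/negP => mt.
have [g' hg'] := Pul_ne hp; have := precuP _ _ pq g' g hg' hg => lt.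
have sgg : sanc g' g.
  case: (up_cases (Pul_u hg') (Pul_u hg)) => [a|/depth_lt l2]; last by rewrite ltnNge ltnW in lt.
  rewrite /sanc a; apply/eqP => E; by rewrite E ltnn in lt.
have g't : ~~ anc g' t by move: (Pul_u hg'); rewrite PthuE => /andP[].
have smg : sanc (ap q) g'.
  case: (anc_cases (sanc_anc sg) (sanc_anc sgg)) => [a|s].
    rewrite /sanc a; apply/eqP => E; by rewrite -E mt in g't.
  by rewrite (anc_trans (sanc_anc s) mt) in g't.
have : g' \in Pth q by apply: (L2' (HSl hq) smg (sanc_anc sgg) (Pul_Pth hg)).
by apply/negP; apply: Pul_excl hg' hq _; rewrite eq_sym.
Qed.

Lemma ClaimB p q : arcu p q -> ap q \in Pth p.
Proof.
move=> arc; have hm := ClaimA arc; case/arcuE: arc => hp hq pq nomid.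
have nepq := precu_neq hp pq.
apply/negPn/negP => np.
have := subsetP Hcov _ hm => /bigcupP[l hl ml].
have nlq : l != q.
  apply/eqP => E; subst l; move: (L1 (HSl hq) ml); apply/negP; exact: sanc_irr.
have nlp : l != p by apply/eqP => E; subst l; rewrite ml in np.
move: (nomid l hl); apply/negP; rewrite negbK; apply/andP; split.
  apply/precuP => f h hf hh; rewrite ltnNge; apply/negP => le.
  have hfu := Pul_u hf; have hhu := Pul_u hh.
  have fm : sanc f (ap q).
    case: (up_cases hfu hm) => [a|smf].
      rewrite /sanc a; apply/eqP => E; by rewrite -E (Pul_Pth hf) in np.
    have [g hg] := Pul_ne hq; have := precuP _ _ pq f g hf hg => lt.
    have sfg : sanc f g.
      case: (up_cases hfu (Pul_u hg)) => [a'|/depth_lt l2]; last by rewrite ltnNge ltnW in lt.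
      rewrite /sanc a'; apply/eqP => E; by rewrite E ltnn in lt.
    have : f \in Pth q by apply: (L2' (HSl hq) smf (sanc_anc sfg) (Pul_Pth hg)).
    by move=> H; move: (Pul_excl hf hq); rewrite eq_sym H => /(_ nepq).
  have hf_l : f \in Pth l.
    by apply: (L2 (HSl hl) (Pul_Pth hh) ml (up_le hhu hfu le) (sanc_anc fm)).
  by move: hf_l; apply/negP; apply: Pul_excl hf hl nlp.
apply/precuP => f g hf hg; rewrite ltnNge; apply/negP => le.
have gf := up_le (Pul_u hg) (Pul_u hf) le.
have sm := L1 (HSl hq) (Pul_Pth hg).
have : g \in Pth l by apply: (L2 (HSl hl) ml (Pul_Pth hf) (sanc_anc sm) gf).
by apply/negP; apply: Pul_excl hg hl nlq.
Qed.

Lemma ClaimC p q q' : arcu p q -> arcu p q' -> q = q'.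
Proof.
move=> a1 a2; case/arcuE: (a1) => hp hq pq n1; case/arcuE: (a2) => _ hq' pq' n2.
apply/eqP/negPn/negP => ne; case/orP: (Tot hq hq' ne) => h.
  by move: (n2 q hq); rewrite pq h.
by move: (n1 q' hq'); rewrite pq' h.
Qed.

Lemma ClaimC' p p' q : arcu p q -> arcu p' q -> p = p'.
Proof.
move=> a1 a2; case/arcuE: (a1) => hp hq pq n1; case/arcuE: (a2) => hp' _ p'q n2.
apply/eqP/negPn/negP => ne; case/orP: (Tot hp hp' ne) => h.
  by move: (n1 p' hp'); rewrite p'q h.
by move: (n2 p hp); rewrite pq h.
Qed.

End Chain.

Section Global.
Variables (F U : {set {set V}}) (Fu : {set V} -> {set {set V}}).
Hypothesis HF : forall l, l \in F -> link l.
Hypothesis HU : forall u, u \in U -> exists t b,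
  [/\ u = [set t; b], anc t b, t != b & Fu_spec par r F u t (Fu u)].
Hypothesis Hdisj : forall u1 u2, u1 \in U -> u2 \in U -> u1 != u2 ->
     [disjoint Pth u1 & Pth u2].

Local Notation arc := (dep_arc par r U Fu).

Lemma disj_eq u1 u2 e : u1 \in U -> u2 \in U -> e \in Pth u1 -> e \in Pth u2 -> u1 = u2.
Proof.
move=> h1 h2 e1 e2; case: (eqVneq u1 u2) => // ne.
by rewrite (disjointFr (Hdisj h1 h2 ne) e1) in e2.
Qed.

Lemma Uinfo u : u \in U -> exists t b v, [/\ u = [set t; b], anc t b, t != b &
   [/\ is_vu par r F u t v, Fu u \subset Bset par r F v, covers (Fu u) (Pth u)
   & forall S' : {set {set V}}, S' \proper Fu u -> ~~ covers S' (Pth u)]].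
Proof.
case/HU => t [b [-> tb ne /and3P[/existsP[v /andP[hv hs]] hc /forallP hm]]].
exists t, b, v; split => //; split => // S' hS'; exact: (implyP (hm S')).
Qed.

Lemma Fu_F u l : u \in U -> l \in Fu u -> l \in F.
Proof.
case/Uinfo => t [b [v [_ _ _ [_ hs _ _]]]] /(subsetP hs); rewrite /Bset inE.
by case/andP.
Qed.

Lemma arcP p q : reflect (exists2 u, u \in U & arcu par r u (Fu u) p q) (arc p q).
Proof. by apply: (iffP exists_inP) => [[u hu h]|[u hu h]]; exists u. Qed.

Lemma arc_F p q : arc p q -> p \in F /\ q \in F.
Proof. by case/arcP => u hu /and4P[hp hq _ _]; split; apply: Fu_F hu _. Qed.

Lemma arc_info p q : arc p q -> exists2 u, u \in U &
   [/\ arcu par r u (Fu u) p q, ap q \in Pth u & ap q \in Pth p].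
Proof.
case/arcP => u hu ha; exists u => //.
have [t [b [v [eu tb ne [_ hs hc hm]]]]] := Uinfo hu.
have HSl : forall l, l \in Fu u -> link l by move=> l hl; apply: HF; apply: Fu_F hu hl.
split => //.
  exact: (@ClaimA u t b (Fu u) ne tb eu HSl hc hm p q ha).
exact: (@ClaimB u t b (Fu u) ne tb eu HSl hc hm p q ha).
Qed.

Lemma arc_sanc p q : arc p q -> sanc (ap p) (ap q).
Proof.
move=> ha; have [hp _] := arc_F ha; have [u _ [_ _ h]] := arc_info ha.
exact: L1 (HF hp) h.
Qed.

Lemma conn_anc x y : connect arc x y -> anc (ap x) (ap y).
Proof.
case/connectP => s; elim: s x => [|z s IH] x /=; first by move=> _ ->; apply: anc_refl.
case/andP => hz hs ey; apply: anc_trans (sanc_anc (arc_sanc hz)) (IH z hs ey).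
Qed.

Lemma indeg p p' q : arc p q -> arc p' q -> p = p'.
Proof.
move=> h1 h2; have [u hu [a1 m1 _]] := arc_info h1; have [u' hu' [a2 m2 _]] := arc_info h2.
have E := disj_eq hu hu' m1 m2; subst u'.
have [t [b [v [eu tb ne [_ hs hc hm]]]]] := Uinfo hu.
have HSl : forall l, l \in Fu u -> link l by move=> l hl; apply: HF; apply: Fu_F hu hl.
exact: (@ClaimC' u t b (Fu u) ne tb eu HSl hc hm _ _ _ a1 a2).
Qed.

Lemma root_ex x : exists rho, connect arc rho x /\ forall z, ~~ arc z rho.
Proof.
move: {2}(depth (ap x)) (leqnn (depth (ap x))) => n; elim: n x => [|n IH] x hx.
  exists x; split => // z; apply/negP => /arc_sanc /depth_lt.
  by rewrite ltnNge (leq_trans hx (leq0n _)).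
case: (pickP (fun z => arc z x)) => [z hz|H]; last first.
  by exists x; split => // z; rewrite H.
have lt := depth_lt (arc_sanc hz).
have [rho [h1 h2]] : exists rho, connect arc rho z /\ forall z, ~~ arc z rho.
  by apply: IH; rewrite -ltnS; exact: leq_trans lt hx.
exists rho; split => //; exact: connect_trans h1 (connect1 hz).
Qed.

Lemma spread rho x y : (forall z, ~~ arc z rho) -> connect arc rho x ->
  connect (dep_sym par r U Fu) x y -> connect arc rho y.
Proof.
move=> nr hx /connectP[s]; elim: s x hx => [|z s IH] x hx /=; first by move=> _ ->.
case/andP => /orP[h|h] hs ey; apply: (IH z) => //.
  exact: connect_trans hx (connect1 h).
case: (eqVneq rho x) => [E|ne]; first by subst x; move: (nr z); rewrite h.
have [w hw hwx] := conn_last hx ne.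
by rewrite (indeg h hwx).
Qed.

Lemma conn_F rho x : rho \in F -> connect arc rho x -> x \in F.
Proof.
move=> hr hx; case: (eqVneq rho x) => [<-//|ne].
by have [w _ /arc_F[]] := conn_last hx ne.
Qed.

Lemma chain q y : q \in F -> connect arc q y -> forall z f, z \in Vl y ->
  sanc (ap q) f -> anc f z -> exists l, [/\ l \in F, anc (ap q) (ap l) & f \in Pth l].
Proof.
move=> qF /connectP[s]; set a := ap q.
suff gen : forall x, x \in F -> anc a (ap x) ->
   (forall z f, z \in Vl x -> sanc a f -> anc f z -> exists l, [/\ l \in F, anc a (ap l) & f \in Pth l]) ->
   path arc x s -> y = last x s ->
   (forall z f, z \in Vl y -> sanc a f -> anc f z -> exists l, [/\ l \in F, anc a (ap l) & f \in Pth l]).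
  apply: gen => //; first exact: anc_refl.
  move=> z f zq saf fz; exists q; split => //; first exact: anc_refl.
  exact: L5 (HF qF) saf fz zq.
elim: s => [|w s IH] x xF ax Hx /=; first by move=> _ ->.
case/andP => hw hs ey; have [_ wF] := arc_F hw.
apply: (IH w) => //; first exact: anc_trans ax (sanc_anc (arc_sanc hw)).
move=> z f zw saf fz; have [u _ [_ _ mx]] := arc_info hw.
have mz := L3 (HF wF) zw.
case: (anc_cases fz mz) => [fm|smf].
  exact: Hx (L6 mx) saf fm.
exists w; split => //; first exact: anc_trans ax (sanc_anc (arc_sanc hw)).
exact: L5 (HF wF) smf fz zw.
Qed.

Lemma main_gen rho n : forall l1 l2 z, depth (ap l1) + depth (ap l2) < n ->
  l1 \in F -> l2 \in F -> connect arc rho l1 -> connect arc rho l2 ->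
  z \in Vl l1 -> z \in Vl l2 -> connect arc l1 l2 || connect arc l2 l1.
Proof.
elim: n => [//|n IH].
have step : forall l1 l2 z, depth (ap l1) + depth (ap l2) < n.+1 ->
  l1 \in F -> l2 \in F -> connect arc rho l1 -> connect arc rho l2 ->
  z \in Vl l1 -> z \in Vl l2 -> anc (ap l1) (ap l2) -> connect arc l1 l2 || connect arc l2 l1.
  move=> l1 l2 z hsum h1 h2 c1 c2 z1 z2 a12.
  case: (eqVneq rho l2) => [E|ne]; first by subst; rewrite c1 orbT.
  have [p cp hp] := conn_last c2 ne.
  have [u hu [au m2u m2p]] := arc_info hp.
  have [pF _] := arc_F hp.
  have m2V1 : ap l2 \in Vl l1 := L4 (HF h1) a12 (L3 (HF h2) z2) z1.
  have lt : depth (ap p) < depth (ap l2) := depth_lt (L1 (HF pF) m2p).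
  have hsum' : depth (ap l1) + depth (ap p) < n.
    by move: hsum; rewrite ltnS => hsum; apply: leq_trans hsum; rewrite ltn_add2l.
  case/orP: (IH l1 p (ap l2) hsum' h1 pF c1 cp m2V1 (L6 m2p)) => [c|c].
    by rewrite (connect_trans c (connect1 hp)).
  case: (eqVneq p l1) => [E|npl]; first by subst; rewrite connect1.
  have [q' hq' cq'] := conn_first c npl.
  case: (eqVneq q' l2) => [E|nq]; first by subst; rewrite cq' orbT.
  exfalso.
  have [u' hu' [au' a'u' a'p]] := arc_info hq'.
  have [t [b [v [eu tb ntb [hv hs hc hm]]]]] := Uinfo hu.
  have HSl : forall l, l \in Fu u -> link l by move=> l hl; apply: HF; apply: Fu_F hu hl.
  case: (eqVneq u' u) => [E|nu].
    subst u'; move/negP: nq; apply; apply/eqP; exact: (@ClaimC u t b (Fu u) ntb tb eu HSl hc hm p q' l2 au' au).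
  have [_ q'F] := arc_F hq'.
  set a' := ap q'.
  have aa1 : anc a' (ap l1) := conn_anc cq'.
  have a'm2 := anc_trans aa1 a12.
  have PE := @PthuE u t b ntb tb eu.
  have a'nu : a' \notin Pth u.
    apply/negP => h; move: (disj_eq hu hu' h a'u') => E; by rewrite E eqxx in nu.
  have a't : anc a' t.
    move: m2u a'nu; rewrite !PE => /andP[m2b _].
    by rewrite (anc_trans a'm2 m2b) /= negbK.
  have cov : covers (Bset par r F a') (Pth u).
    apply/subsetP => e he; apply/bigcupP.
    suff [l [lF al el]] : exists l, [/\ l \in F, anc a' (ap l) & e \in Pth l].
      by exists l => //; rewrite Bset_mem ?(HF lF) // lF al.
    have := he; rewrite PE => /andP[eb et].
    case: (@up_cases u t b ntb tb eu e (ap l2) he m2u) => [em|sme].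
      have sa'e : sanc a' e.
        case: (anc_cases a'm2 em) => [ae|sea].
          rewrite /sanc ae; apply/eqP => E; by rewrite -E a't in et.
        by rewrite (anc_trans (sanc_anc sea) a't) in et.
      exact: (@chain q' l1 q'F cq' (ap l2) e m2V1 sa'e em).
    have := subsetP hc e he => /bigcupP[lj hlj elj].
    have ljF := Fu_F hu hlj.
    case: (boolP (anc a' (ap lj))) => [al|nal]; first by exists lj.
    have sla : sanc (ap lj) a'.
      case: (anc_cases (anc_trans a'm2 (sanc_anc sme)) (sanc_anc (L1 (HF ljF) elj))) => //.
      by move=> h; rewrite h in nal.
    have l2S : l2 \in Fu u by case/and4P: au.
    have [g hg] := Pul_ne hm l2S.
    have g2 := Pul_Pth hc hg.
    case: (@up_cases u t b ntb tb eu e g he (Pul_u hg)) => [eg|sge].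
      exists l2; split => //; exact: L2' (HF h2) sme eg g2.
    have nlj : lj != l2.
      apply/eqP => E; subst lj; move: (sanc_not_anc sla); by rewrite a'm2.
    have : g \in Pth lj.
      apply: (L2' (HF ljF) _ (sanc_anc sge) elj).
      exact: sanc_trans_l sla (anc_trans a'm2 (sanc_anc (L1 (HF h2) g2))).
    by move=> H; move: (Pul_excl hg hlj nlj); rewrite H.
  case/and3P: hv => _ _ /forallP /(_ a') /implyP /(_ (introT andP (conj a't cov))) le.
  have pS : p \in Fu u by case/and4P: au.
  have := subsetP hs p pS; rewrite Bset_mem ?(HF pF) // => /andP[_ vp].
  have := depth_le vp; have := depth_lt (L1 (HF pF) a'p).
  by move=> A B; move: (leq_trans A (leq_trans le B)); rewrite ltnn.
move=> l1 l2 z hsum h1 h2 c1 c2 z1 z2.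
case: (anc_cases (L3 (HF h1) z1) (L3 (HF h2) z2)) => [a|sa].
  exact: step hsum h1 h2 c1 c2 z1 z2 a.
rewrite orbC; apply: (step l2 l1 z) => //; last exact: sanc_anc sa.
by rewrite addnC.
Qed.

End Global.
End Tree.

Unset Implicit Arguments.
Set Strict Implicit.

Theorem lemma12 (V : finType) (par : V -> V) (r : V)
    (L F U : {set {set V}}) (Fu : {set V} -> {set {set V}})
    (C : {set {set V}}) (l0 l1 l2 : {set V}) :
  par r = r ->
  (forall v : V, iter #|V| par v = r) ->
  (forall l, l \in L -> #|l| = 2) ->
  F \subset L ->
  (forall e : V, e != r -> exists2 l, l \in F & e \in Pth par r l) ->
  U \subset L ->
  (forall u, u \in U -> exists t b, u = [set t; b] /\ anc par t b) ->
  (forall u1 u2, u1 \in U -> u2 \in U -> u1 != u2 ->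
     [disjoint Pth par r u1 & Pth par r u2]) ->
  (forall u t b, u \in U -> u = [set t; b] -> anc par t b ->
     Fu_spec par r F u t (Fu u)) ->
  l0 \in F ->
  C = [set l in F | connect (dep_sym par r U Fu) l0 l] ->
  l1 \in C -> l2 \in C ->
  Vl par r l1 :&: Vl par r l2 != set0 ->
  connect (dep_arc par r U Fu) l1 l2 || connect (dep_arc par r U Fu) l2 l1.
Proof.
move=> Hr Hit HL HFL _ HUL HUup Hdisj HFu l0F HC l1C l2C Hint.
have HF : forall l, l \in F -> link l.
  by move=> l /(subsetP HFL) /HL; rewrite /link => ->.
have HU : forall u, u \in U -> exists t b, [/\ u = [set t; b], anc par t b, t != b &
     Fu_spec par r F u t (Fu u)].
  move=> u hu; have [t [b [eu tb]]] := HUup u hu; exists t, b; split => //.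
    apply/negP => /eqP E; have := HL u (subsetP HUL u hu).
    by rewrite eu cards2 E eqxx.
  exact: HFu u t b hu eu tb.
move: l1C l2C; rewrite HC !inE => /andP[h1 s1] /andP[h2 s2].
have [rho [crho nr]] := root_ex Hr Hit HF HU l0.
have c1 := spread Hr Hit HF HU Hdisj nr crho s1.
have c2 := spread Hr Hit HF HU Hdisj nr crho s2.
case/set0Pn: Hint => z; rewrite inE => /andP[z1 z2].
exact: (main_gen Hr Hit HF HU Hdisj (n := (depth par (ap par r l1) + depth par (ap par r l2)).+1) (leqnn _) h1 h2 c1 c2 z1 z2).
Qed.
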